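(* (Postponement of parallel $\bot$-reduction.) For all $s,t\in\Lambda^\infty$: if $s\to^\infty_{\beta\bot}t$ then there exists $r\in\Lambda^\infty$ such that $s\to^\infty_\beta r$ and $r\Rightarrow_\bot t$.
   Context: Fix an infinite set $V$ of variables and a set $C$ of constants with $V\cap C=\emptyset$, containing a distinguished constant $\bot$. $\Lambda^\infty$ is the set of infinitary lambda-terms: all finite and infinite terms generated coinductively by $t ::= c \mid x \mid t\,t \mid \lambda x.t$, identified up to $\alpha$-equivalence (fresh variables are assumed always available). $s[t/x]$ is capture-avoiding substitution, $\equiv$ identity of terms, an atom is a variable or constant. For $R\subseteq\Lambda^\infty\times\Lambda^\infty$, the compatible closure $\to_R$ is the least relation with: $(s,t)\in R\Rightarrow s\to_R t$; $s\to_R s'\Rightarrow st\to_R s't,\ ts\to_R ts',\ \lambda x.s\to_R\lambda x.s'$. $R_\beta=\{((\lambda x.s)t, s[t/x])\}$, $\to_\beta$ its compatible closure, $\to^*_\beta$ its reflexive-transitive closure. A term is in head normal form (hnf) if it is $\lambda x_1\ldots x_m.\,a\,t_1\ldots t_n$ ($m,n\ge0$, $a$ an atom, $a\not\equiv\bot$); $t$ has a hnf if $t\to^*_\beta t'$ with $t'$ in hnf. $R_\bot=\{(t,\bot)\mid t\text{ has no hnf}, t\not\equiv\bot\}$; $\to_{\beta\bot}$ is the compatible closure of $R_\beta\cup R_\bot$. The infinitary closure $\to^\infty$ of a relation $\to$ (with reflexive-transitive closure $\to^*$) is the greatest relation such that whenever $s\to^\infty t$: $t\equiv a$ atom and $s\to^*a$;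 or $t\equiv t_1't_2'$, $s\to^*t_1t_2$, $t_i\to^\infty t_i'$; or $t\equiv\lambda x.r'$, $s\to^*\lambda x.r$, $r\to^\infty r'$. $\to^\infty_\beta$ and $\to^\infty_{\beta\bot}$ are the infinitary closures of $\to_\beta$ and $\to_{\beta\bot}$. Parallel $\bot$-reduction $\Rightarrow_\bot$ is the greatest relation such that whenever $s\Rightarrow_\bot t$, one of: $(s,t)\in R_\bot$; $s\equiv t\equiv a$ an atom; $s\equiv s_1s_2$, $t\equiv t_1t_2$ with $s_i\Rightarrow_\bot t_i$ ($i=1,2$); $s\equiv\lambda x.s'$, $t\equiv\lambda x.t'$ with $s'\Rightarrow_\bot t'$. *)

(* Defs.v *)
(* Infinitary lambda-terms with de Bruijn indices
   (alpha-equivalence is built in), over an arbitrary type C of constants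
   with a distinguished constant [bot]. *)
Set Implicit Arguments.

Section Terms.
Variable C : Type.

CoInductive term : Type :=
| Var : nat -> term
| Con : C -> term
| App : term -> term -> term
| Lam : term -> term.

(* identity of (infinite) terms = bisimilarity *)
CoInductive term_eq : term -> term -> Prop :=
| eq_var n : term_eq (Var n) (Var n)
| eq_con c : term_eq (Con c) (Con c)
| eq_app s1 s2 t1 t2 : term_eq s1 t1 -> term_eq s2 t2 -> term_eq (App s1 s2) (App t1 t2)
| eq_lam s t : term_eq s t -> term_eq (Lam s) (Lam t).

CoFixpoint ren (xi : nat -> nat) (t : term) : term :=
  match t with
  | Var n => Var (xi n)
  | Con c => Con c
  | App a b => App (ren xi a) (ren xi b)
  | Lam a => Lam (ren (fun n => match n with 0 => 0 | S k => S (xi k) end) a)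
  end.

Definition up (sigma : nat -> term) : nat -> term :=
  fun n => match n with 0 => Var 0 | S k => ren S (sigma k) end.

CoFixpoint subst (sigma : nat -> term) (t : term) : term :=
  match t with
  | Var n => sigma n
  | Con c => Con c
  | App a b => App (subst sigma a) (subst sigma b)
  | Lam a => Lam (subst (up sigma) a)
  end.

(* s[t/x] where s is the body of  \x. s  (x = de Bruijn index 0) *)
Definition subst0 (s t : term) : term :=
  subst (fun n => match n with 0 => t | S k => Var k end) s.

Inductive compat (R : term -> term -> Prop) : term -> term -> Prop :=
| c_base s t : R s t -> compat R s t
| c_appl s s' t : compat R s s' -> compat R (App s t) (App s' t)
| c_appr s s' t : compat R s s' -> compat R (App t s) (App t s')
| c_lam s s' : compat R s s' -> compat R (Lam s) (Lam s').

Inductive star (R : term -> term -> Prop) : term -> term -> Prop :=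
| star_refl s : star R s s
| star_step s t u : R s t -> star R t u -> star R s u.

Inductive R_beta : term -> term -> Prop :=
| rbeta s t : R_beta (App (Lam s) t) (subst0 s t).

Definition beta_step := compat R_beta.

Variable bot : C.

Inductive hnf_body : term -> Prop :=
| hb_var n : hnf_body (Var n)
| hb_con c : c <> bot -> hnf_body (Con c)
| hb_app s u : hnf_body s -> hnf_body (App s u).

Inductive is_hnf : term -> Prop :=
| hnf_b t : hnf_body t -> is_hnf t
| hnf_lam t : is_hnf t -> is_hnf (Lam t).

Definition has_hnf (t : term) : Prop :=
  exists t', star beta_step t t' /\ is_hnf t'.

Definition R_bot (s t : term) : Prop :=
  t = Con bot /\ ~ has_hnf s /\ s <> Con bot.

Definition beta_bot_step := compat (fun s t => R_beta s t \/ R_bot s t).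

CoInductive inf (R : term -> term -> Prop) : term -> term -> Prop :=
| inf_var s n : star R s (Var n) -> inf R s (Var n)
| inf_con s c : star R s (Con c) -> inf R s (Con c)
| inf_app s t1 t2 t1' t2' :
    star R s (App t1 t2) -> inf R t1 t1' -> inf R t2 t2' -> inf R s (App t1' t2')
| inf_lam s r r' : star R s (Lam r) -> inf R r r' -> inf R s (Lam r').

CoInductive par_bot : term -> term -> Prop :=
| pb_bot s t : R_bot s t -> par_bot s t
| pb_var n : par_bot (Var n) (Var n)
| pb_con c : par_bot (Con c) (Con c)
| pb_app s1 s2 t1 t2 : par_bot s1 t1 -> par_bot s2 t2 -> par_bot (App s1 s2) (App t1 t2)
| pb_lam s t : par_bot s t -> par_bot (Lam s) (Lam t).

End Terms.

(* Main.v *)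
Require Import Defs.
From Stdlib Require Import Classical ClassicalEpsilon FunctionalExtensionality.

Section S.
Variable C : Type.
Notation T := (term C).

Definition frob (t : T) : T :=
  match t with Var _ n => Var C n | Con c => Con c | App a b => App a b | Lam a => Lam a end.
Lemma frob_eq t : t = frob t. Proof. destruct t; reflexivity. Qed.

Definition upren (xi : nat -> nat) : nat -> nat :=
  fun n => match n with 0 => 0 | S k => S (xi k) end.

Lemma ren_var xi n : ren xi (Var C n) = Var C (xi n) :> T.
Proof. rewrite (frob_eq (ren xi (Var C n))). reflexivity. Qed.
Lemma ren_con xi c : ren xi (Con c) = Con c :> T.
Proof. rewrite (frob_eq (ren xi (Con c))). reflexivity. Qed.
Lemma ren_app xi a b : ren xi (App a b) = App (ren xi a) (ren xi b) :> T.
Proof. rewrite (frob_eq (ren xi (App a b))). reflexivity. Qed.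
Lemma ren_lam xi a : ren xi (Lam a) = Lam (ren (upren xi) a) :> T.
Proof. rewrite (frob_eq (ren xi (Lam a))). reflexivity. Qed.
Lemma subst_var s n : subst s (Var C n) = s n :> T.
Proof. rewrite (frob_eq (subst s (Var C n))). simpl. symmetry. apply frob_eq. Qed.
Lemma subst_con s c : subst s (Con c) = Con c :> T.
Proof. rewrite (frob_eq (subst s (Con c))). reflexivity. Qed.
Lemma subst_app s a b : subst s (App a b) = App (subst s a) (subst s b) :> T.
Proof. rewrite (frob_eq (subst s (App a b))). reflexivity. Qed.
Lemma subst_lam s a : subst s (Lam a) = Lam (subst (up s) a) :> T.
Proof. rewrite (frob_eq (subst s (Lam a))). reflexivity. Qed.

Notation teq := (@term_eq C).

Lemma teq_refl : forall t : T, teq t t.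
Proof. cofix CIH. intros [n|c|a b|a]; constructor; apply CIH. Qed.
Lemma teq_sym : forall s t : T, teq s t -> teq t s.
Proof. cofix CIH. intros s t H; destruct H; constructor; apply CIH; assumption. Qed.
Lemma teq_trans : forall s t u : T, teq s t -> teq t u -> teq s u.
Proof. cofix CIH. intros s t u H1 H2; destruct H1; inversion H2; subst; constructor; eauto. Qed.

Lemma ren_teq : forall x y : T, teq x y -> forall xi, teq (ren xi x) (ren xi y).
Proof.
  cofix CIH. intros x y H xi; destruct H.
  - rewrite !ren_var. constructor.
  - rewrite !ren_con. constructor.
  - rewrite !ren_app. constructor; apply CIH; assumption.
  - rewrite !ren_lam. constructor; apply CIH; assumption.
Qed.

Lemma up_teq (s t : nat -> T) : (forall n, teq (s n) (t n)) -> forall n, teq (up s n) (up t n).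
Proof. intros H [|n]; simpl. apply teq_refl. apply ren_teq, H. Qed.

Lemma subst_teq : forall x y : T, teq x y -> forall s t, (forall n, teq (s n) (t n)) -> teq (subst s x) (subst t y).
Proof.
  cofix CIH. intros x y H s t Hst; destruct H.
  - rewrite !subst_var. apply Hst.
  - rewrite !subst_con. constructor.
  - rewrite !subst_app. constructor; apply CIH; assumption.
  - rewrite !subst_lam. constructor; apply CIH; [assumption|]. apply up_teq; assumption.
Qed.

Lemma ren_ren : forall (x : T) xi zeta theta, (forall n, xi (zeta n) = theta n) ->
  teq (ren xi (ren zeta x)) (ren theta x).
Proof.
  cofix CIH. intros [n|c|a b|a] xi zeta theta H.
  - rewrite !ren_var, H. constructor.
  - rewrite !ren_con. constructor.
  - rewrite !ren_app. constructor; apply CIH; assumption.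
  - rewrite !ren_lam. constructor; apply CIH. intros [|k]; simpl; auto.
Qed.

Lemma subst_ren : forall (x : T) s xi t, (forall n, teq (s (xi n)) (t n)) ->
  teq (subst s (ren xi x)) (subst t x).
Proof.
  cofix CIH. intros [n|c|a b|a] s xi t H.
  - rewrite ren_var, !subst_var. apply H.
  - rewrite ren_con, !subst_con. constructor.
  - rewrite ren_app, !subst_app. constructor; apply CIH; assumption.
  - rewrite ren_lam, !subst_lam. constructor; apply CIH. intros [|k]; simpl.
    apply teq_refl. apply ren_teq, H.
Qed.

Lemma ren_subst : forall (x : T) xi s t, (forall n, teq (ren xi (s n)) (t n)) ->
  teq (ren xi (subst s x)) (subst t x).
Proof.
  cofix CIH. intros [n|c|a b|a] xi s t H.
  - rewrite !subst_var. apply H.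
  - rewrite !subst_con, ren_con. constructor.
  - rewrite !subst_app, ren_app. constructor; apply CIH; assumption.
  - rewrite !subst_lam, ren_lam. constructor; apply CIH. intros [|k]; simpl.
    + rewrite ren_var. constructor.
    + eapply teq_trans. apply ren_ren with (theta := fun n => S (xi n)). reflexivity.
      eapply teq_trans. apply teq_sym, ren_ren with (zeta := xi). reflexivity.
      apply ren_teq, H.
Qed.

Lemma subst_subst : forall (x : T) s t th, (forall n, teq (subst t (s n)) (th n)) ->
  teq (subst t (subst s x)) (subst th x).
Proof.
  cofix CIH. intros [n|c|a b|a] s t th H.
  - rewrite !subst_var. apply H.
  - rewrite !subst_con. constructor.
  - rewrite !subst_app. constructor; apply CIH; assumption.
  - rewrite !subst_lam. constructor; apply CIH. intros [|k]; simpl.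
    + rewrite subst_var. constructor.
    + eapply teq_trans. apply subst_ren with (t := fun n => ren S (t n)). intro; apply teq_refl.
      eapply teq_trans. apply teq_sym, ren_subst. intro; apply teq_refl.
      apply ren_teq, H.
Qed.

Lemma subst_id : forall (x : T) s, (forall n, teq (s n) (Var C n)) -> teq (subst s x) x.
Proof.
  cofix CIH. intros [n|c|a b|a] s H.
  - rewrite !subst_var. apply H.
  - rewrite !subst_con. constructor.
  - rewrite !subst_app. constructor; apply CIH; assumption.
  - rewrite !subst_lam. constructor; apply CIH. intros [|k]; simpl.
    + constructor.
    + rewrite <- (ren_var S k). apply ren_teq, H.
Qed.

Lemma ren_as_subst : forall (x : T) xi s, (forall n, teq (s n) (Var C (xi n))) -> teq (ren xi x) (subst s x).
Proof.
  cofix CIH. intros [n|c|a b|a] xi s H.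
  - rewrite ren_var, !subst_var. apply teq_sym, H.
  - rewrite ren_con, !subst_con. constructor.
  - rewrite ren_app, !subst_app. constructor; apply CIH; assumption.
  - rewrite ren_lam, !subst_lam. constructor; apply CIH. intros [|k]; simpl.
    + constructor.
    + rewrite <- (ren_var S (xi k)). apply ren_teq, H.
Qed.

Definition b0 (d : T) : nat -> T := fun n => match n with 0 => d | S k => Var C k end.
Lemma subst0_eq a d : subst0 a d = subst (b0 d) a. Proof. reflexivity. Qed.

Lemma subst0_teq a a' d d' : teq a a' -> teq d d' -> teq (subst0 a d) (subst0 a' d').
Proof. intros. apply subst_teq; auto. intros [|k]; simpl; auto. apply teq_refl. Qed.

Lemma subst_subst0 s c d :
  teq (subst s (subst0 c d)) (subst0 (subst (up s) c) (subst s d)).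
Proof.
  unfold subst0.
  eapply teq_trans. apply subst_subst with (th := fun n => match n with 0 => subst s d | S k => s k end).
  { intros [|k]; simpl. apply teq_refl. rewrite subst_var. apply teq_refl. }
  apply teq_sym. apply subst_subst.
  intros [|k]; simpl. rewrite subst_var. apply teq_refl.
  eapply teq_trans. apply subst_ren with (t := fun n => Var C n). intro; apply teq_refl.
  apply subst_id. intro; apply teq_refl.
Qed.

Lemma ren_subst0 xi c d :
  teq (ren xi (subst0 c d)) (subst0 (ren (upren xi) c) (ren xi d)).
Proof.
  unfold subst0.
  eapply teq_trans. apply ren_subst with (t := fun n => match n with 0 => ren xi d | S k => Var C (xi k) end).
  { intros [|k]; simpl. apply teq_refl. rewrite ren_var. apply teq_refl. }
  apply teq_sym. apply subst_ren. intros [|k]; simpl; apply teq_refl.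
Qed.

Lemma star_trans R : forall s t u : T, star R s t -> star R t u -> star R s u.
Proof. intros s t u H; induction H; intros; auto. econstructor; eauto. Qed.
Lemma star_one R (s t : T) : R s t -> star R s t.
Proof. intros; econstructor; eauto. constructor. Qed.
Lemma star_map R R' (f : T -> T) : (forall s t, R s t -> R' (f s) (f t)) ->
  forall s t, star R s t -> star R' (f s) (f t).
Proof. intros Hf s t H; induction H. constructor. econstructor; eauto. Qed.
Lemma star_incl R R' : (forall s t : T, R s t -> R' s t) -> forall s t, star R s t -> star R' s t.
Proof. intros Hf s t H; induction H. constructor. econstructor; eauto. Qed.

Inductive wh : T -> T -> Prop :=
| wh_beta a b : wh (App (Lam a) b) (subst0 a b)
| wh_app a a' b : wh a a' -> wh (App a b) (App a' b).

Lemma wh_beta_step : forall s t, wh s t -> beta_step s t.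
Proof. intros s t H; induction H. apply c_base; constructor. apply c_appl; auto. Qed.

Lemma beta_sim : forall y y', beta_step y y' -> forall x, teq x y -> exists x', beta_step x x' /\ teq x' y'.
Proof.
  intros y y' H; induction H; intros x Hx.
  - destruct H. inversion Hx; subst. match goal with H : teq _ (Lam _) |- _ => inversion H; subst end.
    eexists; split. apply c_base. constructor. apply subst0_teq; assumption.
  - inversion Hx; subst. destruct (IHcompat _ ltac:(eassumption)) as [x' [Hq1 Hq2]].
    eexists; split. apply c_appl; eauto. constructor; auto.
  - inversion Hx; subst. destruct (IHcompat _ ltac:(eassumption)) as [x' [Hq1 Hq2]].
    eexists; split. apply c_appr; eauto. constructor; auto.
  - inversion Hx; subst. destruct (IHcompat _ ltac:(eassumption)) as [x' [Hq1 Hq2]].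
    eexists; split. apply c_lam; eauto. constructor; auto.
Qed.

Lemma wh_sim : forall y y', wh y y' -> forall x, teq x y -> exists x', wh x x' /\ teq x' y'.
Proof.
  intros y y' H; induction H; intros x Hx.
  - inversion Hx; subst. match goal with H : teq _ (Lam _) |- _ => inversion H; subst end.
    eexists; split. constructor. apply subst0_teq; assumption.
  - inversion Hx; subst. destruct (IHwh _ ltac:(eassumption)) as [x' [Hq1 Hq2]].
    eexists; split. apply wh_app; eauto. constructor; auto.
Qed.

Lemma star_sim R : (forall y y', R y y' -> forall x, teq x y -> exists x', R x x' /\ teq x' y') ->
  forall y y', star R y y' -> forall x, teq x y -> exists x', star R x x' /\ teq x' y'.
Proof.
  intros Hs y y' H; induction H; intros x Hx.
  - exists x; split; auto. constructor.
  - destruct (Hs _ _ H _ Hx) as [x1 [H1 H2]]. destruct (IHstar _ H2) as [x2 [H3 H4]].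
    exists x2; split; auto. econstructor; eauto.
Qed.

Variable bot : C.

Lemma hnf_body_teq : forall y, hnf_body bot y -> forall x, teq x y -> hnf_body bot x.
Proof. intros y H; induction H; intros x Hx; inversion Hx; subst; constructor; auto. Qed.
Lemma is_hnf_teq : forall y, is_hnf bot y -> forall x, teq x y -> is_hnf bot x.
Proof. intros y H; induction H; intros x Hx.
  - constructor. eapply hnf_body_teq; eauto.
  - inversion Hx; subst. apply hnf_lam; auto. Qed.
Lemma has_hnf_teq x y : has_hnf bot x -> teq y x -> has_hnf bot y.
Proof. intros [h [H1 H2]] Hyx. destruct (star_sim _ beta_sim _ _ H1 _ Hyx) as [h' [H3 H4]].
  exists h'; split; auto. eapply is_hnf_teq; eauto. Qed.

Lemma wh_subst : forall p p1, wh p p1 -> forall s, exists z, wh (subst s p) z /\ teq z (subst s p1).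
Proof.
  intros p p1 H; induction H; intros s.
  - rewrite subst_app, subst_lam. eexists; split. constructor. apply teq_sym, subst_subst0.
  - destruct (IHwh s) as [z [H1 H2]]. rewrite !subst_app. eexists; split. apply wh_app; eauto.
    constructor; auto. apply teq_refl.
Qed.
Lemma wh_ren : forall p p1, wh p p1 -> forall xi, exists z, wh (ren xi p) z /\ teq z (ren xi p1).
Proof.
  intros p p1 H; induction H; intros xi.
  - rewrite ren_app, ren_lam. eexists; split. constructor. apply teq_sym, ren_subst0.
  - destruct (IHwh xi) as [z [H1 H2]]. rewrite !ren_app. eexists; split. apply wh_app; eauto.
    constructor; auto. apply teq_refl.
Qed.

Lemma whs_map (f : T -> T) : (forall p p1, wh p p1 -> exists z, wh (f p) z /\ teq z (f p1)) ->
  forall p p0, star wh p p0 -> forall x, teq x (f p) -> exists z, star wh x z /\ teq z (f p0).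
Proof.
  intros Hf p p0 H; induction H; intros x Hx.
  - exists x; split; auto. constructor.
  - destruct (Hf _ _ H) as [z1 [H1 H2]]. destruct (wh_sim _ _ H1 _ Hx) as [x1 [H3 H4]].
    destruct (IHstar x1 (teq_trans _ _ _ H4 H2)) as [z [H5 H6]].
    exists z; split; auto. econstructor; eauto.
Qed.

Lemma whs_app : forall a a' b : T, star wh a a' -> star wh (App a b) (App a' b).
Proof. intros. apply (star_map wh wh (fun x => App x b)); auto. intros; apply wh_app; auto. Qed.

CoInductive std : T -> T -> Prop :=
| std_var t n : star wh t (Var C n) -> std t (Var C n)
| std_con t c : star wh t (Con c) -> std t (Con c)
| std_app t a1 a2 b1 b2 : star wh t (App a1 a2) -> std a1 b1 -> std a2 b2 -> std t (App b1 b2)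
| std_lam t a b : star wh t (Lam a) -> std a b -> std t (Lam b).

Lemma std_refl : forall t, std t t.
Proof. cofix CIH. intros [n|c|a b|a].
  - constructor; constructor.
  - constructor; constructor.
  - econstructor. constructor. apply CIH. apply CIH.
  - econstructor. constructor. apply CIH. Qed.

Lemma std_pre t u s : star wh t u -> std u s -> std t s.
Proof. intros H1 H2; destruct H2; econstructor; eauto using star_trans. Qed.

Lemma std_teq_l : forall x y s, teq x y -> std y s -> std x s.
Proof.
  cofix CIH. intros x y s Hxy H; destruct H as [y n H|y c H|y a1 a2 b1 b2 H H1 H2|y a b H H1];
    destruct (star_sim _ wh_sim _ _ H _ Hxy) as [x' [H3 H4]]; inversion H4; subst.
  - constructor; auto.
  - constructor; auto.
  - econstructor; eauto.
  - econstructor; eauto.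
Qed.

Lemma std_ren : forall p a, std p a -> forall xi x, teq x (ren xi p) -> std x (ren xi a).
Proof.
  cofix CIH. intros p a H xi x Hx. destruct H as [p n H|p c H|p a1 a2 b1 b2 H H1 H2|p a b H H1];
    destruct (whs_map _ (fun p p1 Hp => wh_ren p p1 Hp xi) _ _ H _ Hx) as [z [H3 H4]].
  - rewrite ren_var in *. inversion H4; subst. constructor; auto.
  - rewrite ren_con in *. inversion H4; subst. constructor; auto.
  - rewrite ren_app in *. inversion H4; subst. econstructor. eauto.
    eapply CIH; eauto. eapply CIH; eauto.
  - rewrite ren_lam in *. inversion H4; subst. econstructor. eauto. eapply CIH; eauto.
Qed.

Lemma std_subst : forall p a, std p a -> forall s s', (forall n, std (s n) (s' n)) ->
  forall x, teq x (subst s p) -> std x (subst s' a).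
Proof.
  cofix CIH. intros p a H s s' Hs x Hx. destruct H as [p n H|p c H|p a1 a2 b1 b2 H H1 H2|p a b H H1];
    destruct (whs_map _ (fun p p1 Hp => wh_subst p p1 Hp s) _ _ H _ Hx) as [z [H3 H4]].
  - rewrite subst_var in *. eapply std_pre; eauto. eapply std_teq_l; eauto.
  - rewrite subst_con in *. inversion H4; subst. constructor; auto.
  - rewrite subst_app in *. inversion H4; subst. econstructor. eauto.
    eapply CIH; eauto. eapply CIH; eauto.
  - rewrite subst_lam in *. inversion H4; subst. econstructor. eauto. eapply CIH; eauto.
    intros [|k]; simpl. constructor; constructor. eapply std_ren; eauto. apply teq_refl.
Qed.

Lemma std_L : forall u u1, wh u u1 -> forall t, std t u -> exists t1, star wh t t1 /\ std t1 u1.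
Proof.
  intros u u1 H; induction H; intros t Ht.
  - inversion Ht; subst. match goal with H : std _ (Lam _) |- _ => inversion H; subst end.
    eexists; split. eapply star_trans. eauto. eapply star_trans. apply whs_app; eauto.
    apply star_one. constructor.
    match goal with |- std (subst0 ?p ?q) (subst0 ?a ?b) =>
      change (std (subst (b0 q) p) (subst (b0 b) a)) end.
    apply std_subst with (p := a0) (s := b0 a2); [assumption| |apply teq_refl].
    intros [|k]; simpl; auto. apply std_refl.
  - inversion Ht; subst. destruct (IHwh _ ltac:(eassumption)) as [t1 [Hq1 Hq2]].
    eexists; split. eapply star_trans. eauto. apply whs_app; eauto.
    econstructor. constructor. eauto. auto.
Qed.

Lemma std_Ls : forall u u1, star wh u u1 -> forall t, std t u -> exists t1, star wh t t1 /\ std t1 u1.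
Proof.
  intros u u1 H; induction H; intros t' Ht.
  - exists t'; split; auto; constructor.
  - destruct (std_L _ _ H _ Ht) as [t1 [H1 H2]]. destruct (IHstar _ H2) as [t2 [H3 H4]].
    exists t2; split; auto. eapply star_trans; eauto.
Qed.

Lemma std_trans : forall t u s, std t u -> std u s -> std t s.
Proof.
  cofix CIH. intros t u s H1 H2. destruct H2 as [u n H|u c H|u a1 a2 b1 b2 H H3 H4|u a b H H3];
    destruct (std_Ls _ _ H _ H1) as [t' [H5 H6]]; inversion H6; subst.
  - constructor. eapply star_trans; eauto.
  - constructor. eapply star_trans; eauto.
  - econstructor. eapply star_trans; eauto. eapply CIH; eauto. eapply CIH; eauto.
  - econstructor. eapply star_trans; eauto. eapply CIH; eauto.
Qed.

Lemma beta_std : forall t u, beta_step t u -> std t u.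
Proof.
  intros t u H; induction H.
  - destruct H. eapply std_pre. apply star_one. constructor. apply std_refl.
  - econstructor. constructor. auto. apply std_refl.
  - econstructor. constructor. apply std_refl. auto.
  - econstructor. constructor. auto.
Qed.

Lemma star_std : forall t u, star (@beta_step C) t u -> std t u.
Proof. intros t u H; induction H. apply std_refl. eapply std_trans; eauto using beta_std. Qed.

Inductive VH : T -> Prop :=
| vh_var n : VH (Var C n)
| vh_app a b : VH a -> VH (App a b).

Lemma VH_body u : VH u -> hnf_body bot u.
Proof. induction 1; constructor; auto. Qed.

Lemma WHS1 : forall w w', wh w w' -> forall s u, teq w (subst s u) ->
  VH u \/ exists u', wh u u' /\ teq w' (subst s u').
Proof.
  intros w w' H; induction H; intros s u Hu.
  - destruct u as [n|c'|u1 u2|u1].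
    + left; constructor.
    + rewrite subst_con in Hu; inversion Hu.
    + rewrite subst_app in Hu; inversion Hu; subst.
      destruct u1 as [n|c'|v1 v2|c0].
      * left; repeat constructor.
      * rewrite subst_con in *. match goal with H : teq (Lam _) (Con _) |- _ => inversion H end.
      * rewrite subst_app in *. match goal with H : teq (Lam _) (App _ _) |- _ => inversion H end.
      * rewrite subst_lam in *. match goal with H : teq (Lam _) (Lam _) |- _ => inversion H; subst end.
        right. exists (subst0 c0 u2). split. constructor.
        eapply teq_trans. apply subst0_teq; eassumption. apply teq_sym, subst_subst0.
    + rewrite subst_lam in Hu; inversion Hu.
  - destruct u as [n|c'|u1 u2|u1].
    + left; constructor.
    + rewrite subst_con in Hu; inversion Hu.
    + rewrite subst_app in Hu; inversion Hu; subst.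
      destruct (IHwh s u1 ltac:(eassumption)) as [Hv|[u' [Hq1 Hq2]]].
      * left; constructor; auto.
      * right. exists (App u' u2). split. constructor; auto. rewrite subst_app. constructor; auto.
    + rewrite subst_lam in Hu; inversion Hu.
Qed.

Lemma WHS : forall w z, star wh w z -> forall s u, teq w (subst s u) ->
  (exists v, star wh u v /\ VH v) \/ exists u', star wh u u' /\ teq z (subst s u').
Proof.
  intros w z H; induction H; intros s' x Hu.
  - right. exists x; split; auto. constructor.
  - destruct (WHS1 _ _ H _ _ Hu) as [Hv|[u1 [H1 H2]]]. left; exists x; split; auto; constructor.
    destruct (IHstar _ _ H2) as [[v [Hv1 Hv2]]|[u2 [H3 H4]]].
    left. exists v; split; auto. econstructor; eauto.
    right. exists u2; split; auto. econstructor; eauto.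
Qed.

Lemma whs_beta s t : star wh s t -> star (@beta_step C) s t.
Proof. apply star_incl. apply wh_beta_step. Qed.

Lemma stb_app1 (a a' b : T) : star (@beta_step C) a a' -> star (@beta_step C) (App a b) (App a' b).
Proof. apply (star_map _ _ (fun x => App x b)). intros; apply c_appl; auto. Qed.
Lemma stb_app2 (a b b' : T) : star (@beta_step C) b b' -> star (@beta_step C) (App a b) (App a b').
Proof. apply (star_map _ _ (fun x => App a x)). intros; apply c_appr; auto. Qed.
Lemma stb_lam (a a' : T) : star (@beta_step C) a a' -> star (@beta_step C) (Lam a) (Lam a').
Proof. apply (star_map _ _ (fun x => Lam x)). intros; apply c_lam; auto. Qed.

Lemma F1_body : forall h, hnf_body bot h -> forall w sg x, teq w (subst sg x) -> std w h ->
  exists v, star (@beta_step C) x v /\ hnf_body bot v.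
Proof.
  intros h H; induction H; intros w sg x Hw Hs; inversion Hs; subst.
  - destruct (WHS _ _ ltac:(eassumption) _ _ Hw) as [Hv|[u' [Hw3 Hw4]]].
    + destruct Hv as [v [Hv1 Hv2]]. exists v; split. apply whs_beta; auto. apply VH_body; auto.
    + exists u'; split. apply whs_beta; auto.
      destruct u' as [m|c'|v1 v2|v1]; [constructor| rewrite subst_con in Hw4 | rewrite subst_app in Hw4 | rewrite subst_lam in Hw4]; inversion Hw4.
  - destruct (WHS _ _ ltac:(eassumption) _ _ Hw) as [Hv|[u' [Hw3 Hw4]]].
    + destruct Hv as [v [Hv1 Hv2]]. exists v; split. apply whs_beta; auto. apply VH_body; auto.
    + exists u'; split. apply whs_beta; auto.
      destruct u' as [m|c'|v1 v2|v1]; [constructor| rewrite subst_con in Hw4 | rewrite subst_app in Hw4 | rewrite subst_lam in Hw4]; inversion Hw4; subst.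
      constructor; auto.
  - destruct (WHS _ _ ltac:(eassumption) _ _ Hw) as [Hv|[u' [Hw3 Hw4]]].
    + destruct Hv as [v [Hv1 Hv2]]. exists v; split. apply whs_beta; auto. apply VH_body; auto.
    + destruct u' as [m|c'|v1 v2|v1].
      * exists (Var C m); split. apply whs_beta; auto. constructor.
      * rewrite subst_con in Hw4; inversion Hw4.
      * rewrite subst_app in Hw4; inversion Hw4; subst.
        destruct (IHhnf_body _ sg v1 ltac:(eassumption) ltac:(eassumption)) as [v [Hq1 Hq2]].
        exists (App v v2); split. eapply star_trans. apply whs_beta; eauto. apply stb_app1; auto.
        constructor; auto.
      * rewrite subst_lam in Hw4; inversion Hw4.
Qed.

Lemma F1_hnf : forall h, is_hnf bot h -> forall w sg x, teq w (subst sg x) -> std w h -> has_hnf bot x.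
Proof.
  intros h H; induction H; intros w sg x Hw Hs.
  - destruct (F1_body _ H _ _ _ Hw Hs) as [v [H1 H2]]. exists v; split; auto. constructor; auto.
  - inversion Hs; subst. destruct (WHS _ _ ltac:(eassumption) _ _ Hw) as [Hv|[u' [Hw3 Hw4]]].
    + destruct Hv as [v [Hv1 Hv2]]. exists v; split. apply whs_beta; auto. constructor. apply VH_body; auto.
    + destruct u' as [m|c'|v1 v2|v1].
      * exists (Var C m); split. apply whs_beta; auto. repeat constructor.
      * rewrite subst_con in Hw4; inversion Hw4.
      * rewrite subst_app in Hw4; inversion Hw4.
      * rewrite subst_lam in Hw4; inversion Hw4; subst.
        destruct (IHis_hnf _ _ _ ltac:(eassumption) ltac:(eassumption)) as [v [Hq1 Hq2]].
        exists (Lam v); split. eapply star_trans. apply whs_beta; eauto. apply stb_lam; auto.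
        apply hnf_lam; auto.
Qed.

Lemma F1 s u : has_hnf bot (subst s u) -> has_hnf bot u.
Proof. intros [h [H1 H2]]. exact (F1_hnf h H2 (subst s u) s u (teq_refl _) (star_std _ _ H1)). Qed.

Lemma F1ren xi u : has_hnf bot (ren xi u) -> has_hnf bot u.
Proof. intros H. apply (F1 (fun n => Var C (xi n))). eapply has_hnf_teq; eauto.
  apply teq_sym, ren_as_subst. intro; apply teq_refl. Qed.

Inductive Bt : T -> Prop :=
| bt_bot : Bt (Con bot)
| bt_app a b : Bt a -> Bt (App a b).

Lemma Bt_subst s t : Bt t -> Bt (subst s t).
Proof. induction 1. rewrite subst_con; constructor. rewrite subst_app; constructor; auto. Qed.
Lemma Bt_ren xi t : Bt t -> Bt (ren xi t).
Proof. induction 1. rewrite ren_con; constructor. rewrite ren_app; constructor; auto. Qed.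

Lemma Bt_step : forall t, Bt t -> forall t', beta_step t t' -> Bt t'.
Proof.
  intros t H; induction H; intros t' Hs; inversion Hs; subst.
  - inversion H.
  - inversion H0; subst. inversion H.
  - constructor; auto.
  - constructor; auto.
Qed.
Lemma Bt_star t t' : star (@beta_step C) t t' -> Bt t -> Bt t'.
Proof. induction 1; auto. intros; apply IHstar. eapply Bt_step; eauto. Qed.
Lemma Bt_body : forall t, Bt t -> hnf_body bot t -> False.
Proof. intros t H; induction H; intros Hb; inversion Hb; auto. Qed.
Lemma Bt_nohnf t : Bt t -> ~ has_hnf bot t.
Proof. intros H [h [H1 H2]]. pose proof (Bt_star _ _ H1 H) as Hb. destruct H2.
  eapply Bt_body; eauto. inversion Hb. Qed.

Lemma hnf_has t : is_hnf bot t -> has_hnf bot t.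
Proof. intros; exists t; split; auto; constructor. Qed.
Lemma nohnf_step t t' : ~ has_hnf bot t -> beta_step t t' -> ~ has_hnf bot t'.
Proof. intros H Hs [h [H1 H2]]. apply H. exists h; split; auto. econstructor; eauto. Qed.
Lemma nohnf_star t t' : ~ has_hnf bot t -> star (@beta_step C) t t' -> ~ has_hnf bot t'.
Proof. intros H Hs [h [H1 H2]]. apply H. exists h; split; auto. eapply star_trans; eauto. Qed.
Lemma nohnf_lam a : ~ has_hnf bot (Lam a) -> ~ has_hnf bot a.
Proof. intros H [h [H1 H2]]. apply H. exists (Lam h); split. apply stb_lam; auto. apply hnf_lam; auto. Qed.

CoInductive pbU : T -> T -> Prop :=
| pu_U r t : ~ has_hnf bot r -> Bt t -> pbU r t
| pu_var n : pbU (Var C n) (Var C n)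
| pu_con c : pbU (Con c) (Con c)
| pu_app s1 s2 t1 t2 : pbU s1 t1 -> pbU s2 t2 -> pbU (App s1 s2) (App t1 t2)
| pu_lam s t : pbU s t -> pbU (Lam s) (Lam t).

Lemma pbU_ren : forall x y, pbU x y -> forall xi, pbU (ren xi x) (ren xi y).
Proof.
  cofix CIH. intros x y H xi; destruct H as [r t Hn Hb| | | |].
  - apply pu_U. intro Hh; apply Hn. exact (F1ren _ _ Hh). apply Bt_ren; auto.
  - rewrite !ren_var; apply pu_var.
  - rewrite !ren_con; apply pu_con.
  - rewrite !ren_app; apply pu_app; apply CIH; auto.
  - rewrite !ren_lam; apply pu_lam; apply CIH; auto.
Qed.

Lemma pbU_subst : forall a a', pbU a a' -> forall s s', (forall n, pbU (s n) (s' n)) ->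
  pbU (subst s a) (subst s' a').
Proof.
  cofix CIH. intros a a' H s s' Hs; destruct H as [r t Hn Hb| | | |].
  - apply pu_U. intro Hh; apply Hn. exact (F1 _ _ Hh). apply Bt_subst; auto.
  - rewrite !subst_var; auto.
  - rewrite !subst_con; apply pu_con.
  - rewrite !subst_app; apply pu_app; apply CIH; auto.
  - rewrite !subst_lam; apply pu_lam; apply CIH; auto.
    intros [|k]; simpl. apply pu_var. apply pbU_ren; auto.
Qed.

Lemma F2sim : forall r r1, beta_step r r1 -> forall t, pbU r t ->
  exists t1, star (@beta_step C) t t1 /\ pbU r1 t1.
Proof.
  intros r r1 H; induction H; intros t0 Ht.
  - destruct H. inversion Ht; subst.
    + exists t0; split. constructor. apply pu_U; auto.
      eapply nohnf_step; eauto. apply c_base; constructor.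
    + match goal with H : pbU (Lam _) _ |- _ => inversion H; subst end.
      * exists (App t1 t2); split. constructor. apply pu_U. 2: constructor; auto.
        intro Hh. apply F1 in Hh. eapply nohnf_lam; eauto.
      * eexists; split. apply star_one. apply c_base. constructor.
        apply pbU_subst; auto. intros [|k]; simpl; auto. apply pu_var.
  - inversion Ht; subst.
    + exists t0; split. constructor. apply pu_U; auto. eapply nohnf_step; eauto. apply c_appl; auto.
    + destruct (IHcompat _ ltac:(eassumption)) as [t1' [Hq1 Hq2]].
      eexists; split. apply stb_app1; eauto. apply pu_app; auto.
  - inversion Ht; subst.
    + exists t0; split. constructor. apply pu_U; auto. eapply nohnf_step; eauto. apply c_appr; auto.
    + destruct (IHcompat _ ltac:(eassumption)) as [t1' [Hq1 Hq2]].
      eexists; split. apply stb_app2; eauto. apply pu_app; auto.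
  - inversion Ht; subst.
    + exists t0; split. constructor. apply pu_U; auto. eapply nohnf_step; eauto. apply c_lam; auto.
    + destruct (IHcompat _ ltac:(eassumption)) as [t1' [Hq1 Hq2]].
      eexists; split. apply stb_lam; eauto. apply pu_lam; auto.
Qed.

Lemma F2star : forall r r1, star (@beta_step C) r r1 -> forall t, pbU r t ->
  exists t1, star (@beta_step C) t t1 /\ pbU r1 t1.
Proof.
  intros r r1 H; induction H; intros t0 Ht.
  - exists t0; split; auto; constructor.
  - destruct (F2sim _ _ H _ Ht) as [t1 [H1 H2]]. destruct (IHstar _ H2) as [t2 [H3 H4]].
    exists t2; split; auto. eapply star_trans; eauto.
Qed.

Lemma pbU_body : forall h, hnf_body bot h -> forall t, pbU h t -> hnf_body bot t.
Proof.
  intros h H; induction H; intros t0 Ht; inversion Ht; subst;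
    try (exfalso; match goal with H : ~ has_hnf _ _ |- _ => apply H end; apply hnf_has; constructor; constructor; auto);
    constructor; auto.
Qed.
Lemma pbU_hnf : forall h, is_hnf bot h -> forall t, pbU h t -> is_hnf bot t.
Proof.
  intros h H; induction H; intros t0 Ht.
  - constructor. eapply pbU_body; eauto.
  - inversion Ht; subst.
    + exfalso. match goal with H : ~ has_hnf _ _ |- _ => apply H end. apply hnf_has. apply hnf_lam; auto.
    + apply hnf_lam; auto.
Qed.
Lemma F2 r t : pbU r t -> has_hnf bot r -> has_hnf bot t.
Proof. intros H [h [H1 H2]]. destruct (F2star _ _ H1 _ H) as [t1 [H3 H4]].
  exists t1; split; auto. eapply pbU_hnf; eauto. Qed.

Notation pb := (par_bot bot).

Lemma pb_refl : forall t, pb t t.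
Proof. cofix CIH. intros [n|c|a b|a]. apply pb_var. apply pb_con. apply pb_app; apply CIH. apply pb_lam; apply CIH. Qed.

Lemma pb_pbU : forall r t, pb r t -> pbU r t.
Proof.
  cofix CIH. intros r t H; destruct H as [r t [He [Hn _]]| | | |].
  - subst. apply pu_U; auto. constructor.
  - apply pu_var.
  - apply pu_con.
  - apply pu_app; apply CIH; auto.
  - apply pu_lam; apply CIH; auto.
Qed.

Lemma pb_to_bot r : ~ has_hnf bot r -> pb r (Con bot).
Proof. intros H. destruct (classic (r = Con bot)) as [E|E]. subst; apply pb_con.
  apply pb_bot. split; auto. Qed.

Lemma pb_ren : forall x y, pb x y -> forall xi, pb (ren xi x) (ren xi y).
Proof.
  cofix CIH. intros x y H xi; destruct H as [r t [He [Hn _]]| | | |].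
  - subst. rewrite ren_con. apply pb_to_bot. intro Hh; apply Hn. exact (F1ren _ _ Hh).
  - rewrite !ren_var; apply pb_var.
  - rewrite !ren_con; apply pb_con.
  - rewrite !ren_app; apply pb_app; apply CIH; auto.
  - rewrite !ren_lam; apply pb_lam; apply CIH; auto.
Qed.

Lemma pb_subst : forall a a', pb a a' -> forall s s', (forall n, pb (s n) (s' n)) ->
  pb (subst s a) (subst s' a').
Proof.
  cofix CIH. intros a a' H s s' Hs; destruct H as [r t [He [Hn _]]| | | |].
  - subst. rewrite subst_con. apply pb_to_bot. intro Hh; apply Hn. exact (F1 _ _ Hh).
  - rewrite !subst_var; auto.
  - rewrite !subst_con; apply pb_con.
  - rewrite !subst_app; apply pb_app; apply CIH; auto.
  - rewrite !subst_lam; apply pb_lam; apply CIH; auto.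
    intros [|k]; simpl. apply pb_var. apply pb_ren; auto.
Qed.

Lemma PP1 : forall t u, beta_bot_step bot t u -> forall r, pb r t ->
  exists r', star (@beta_step C) r r' /\ pb r' u.
Proof.
  intros t u H; induction H; intros r Hr.
  - destruct H as [H|H].
    + destruct H. inversion Hr; subst.
      * destruct H as [He _]; discriminate.
      * match goal with H : pb _ (Lam _) |- _ => inversion H; subst end.
        -- match goal with H : R_bot _ _ _ |- _ => destruct H as [He _]; discriminate end.
        -- eexists; split. apply star_one. apply c_base. constructor.
           apply pb_subst; auto. intros [|k]; simpl; auto. apply pb_var.
    + destruct H as [He [Hn Hne]]. subst. exists r; split. constructor.
      apply pb_to_bot. intro Hh. apply Hn. eapply F2; eauto. apply pb_pbU; auto.
  - inversion Hr; subst.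
    + match goal with H : R_bot _ _ _ |- _ => destruct H as [He _]; discriminate end.
    + destruct (IHcompat _ ltac:(eassumption)) as [r1 [Hq1 Hq2]].
      eexists; split. apply stb_app1; eauto. apply pb_app; auto.
  - inversion Hr; subst.
    + match goal with H : R_bot _ _ _ |- _ => destruct H as [He _]; discriminate end.
    + destruct (IHcompat _ ltac:(eassumption)) as [r1 [Hq1 Hq2]].
      eexists; split. apply stb_app2; eauto. apply pb_app; auto.
  - inversion Hr; subst.
    + match goal with H : R_bot _ _ _ |- _ => destruct H as [He _]; discriminate end.
    + destruct (IHcompat _ ltac:(eassumption)) as [r1 [Hq1 Hq2]].
      eexists; split. apply stb_lam; eauto. apply pb_lam; auto.
Qed.

Lemma PPs : forall t u, star (beta_bot_step bot) t u -> forall r, pb r t ->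
  exists r', star (@beta_step C) r r' /\ pb r' u.
Proof.
  intros t u H; induction H; intros r Hr.
  - exists r; split; auto; constructor.
  - destruct (PP1 _ _ H _ Hr) as [r1 [H1 H2]]. destruct (IHstar _ H2) as [r2 [H3 H4]].
    exists r2; split; auto. eapply star_trans; eauto.
Qed.

Definition Pp s t := exists t0, pb s t0 /\ inf (beta_bot_step bot) t0 t.

Definition Qa s t1 t2 r1 r2 := star (@beta_step C) s (App r1 r2) /\ Pp r1 t1 /\ Pp r2 t2.
Definition Ql s t1 r1 := star (@beta_step C) s (Lam r1) /\ Pp r1 t1.
Definition Qt s t r := star (@beta_step C) s r /\ pb r t.

Lemma Pp_app s t1 t2 : Pp s (App t1 t2) -> exists r1 r2, Qa s t1 t2 r1 r2.
Proof.
  intros [t0 [H1 H2]]. inversion H2; subst.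
  destruct (PPs _ _ ltac:(eassumption) _ H1) as [r [Hr5 Hr6]]. inversion Hr6; subst.
  - match goal with H : R_bot _ _ _ |- _ => destruct H as [He _]; discriminate end.
  - exists s1, s2. split; auto. split; eexists; eauto.
Qed.
Lemma Pp_lam s t1 : Pp s (Lam t1) -> exists r1, Ql s t1 r1.
Proof.
  intros [t0 [H1 H2]]. inversion H2; subst.
  destruct (PPs _ _ ltac:(eassumption) _ H1) as [r0 [Hr5 Hr6]]. inversion Hr6; subst.
  - match goal with H : R_bot _ _ _ |- _ => destruct H as [He _]; discriminate end.
  - exists s0. split; auto. eexists; eauto.
Qed.
Lemma Pp_at s t : Pp s t -> (forall a b, t <> App a b) -> (forall a, t <> Lam a) -> exists r, Qt s t r.
Proof.
  intros [t0 [H1 H2]] Ha Hl. inversion H2; subst.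
  - destruct (PPs _ _ ltac:(eassumption) _ H1) as [r [Hr5 Hr6]]. exists r; split; auto.
  - destruct (PPs _ _ ltac:(eassumption) _ H1) as [r [Hr5 Hr6]]. exists r; split; auto.
  - exfalso; eapply Ha; eauto.
  - exfalso; eapply Hl; eauto.
Qed.

Definition ch_app s t1 t2 : T * T :=
  match excluded_middle_informative (exists r1 r2, Qa s t1 t2 r1 r2) with
  | left H => let (r1, H1) := constructive_indefinite_description _ H in
              let (r2, _) := constructive_indefinite_description _ H1 in (r1, r2)
  | right _ => (s, s)
  end.
Lemma ch_app_spec s t1 t2 : (exists r1 r2, Qa s t1 t2 r1 r2) -> Qa s t1 t2 (fst (ch_app s t1 t2)) (snd (ch_app s t1 t2)).
Proof. intros H. unfold ch_app. destruct (excluded_middle_informative _); [|contradiction].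
  destruct (constructive_indefinite_description _ e) as [r1 H1].
  destruct (constructive_indefinite_description _ H1) as [r2 H2]. exact H2. Qed.

Definition ch_lam s t1 : T :=
  match excluded_middle_informative (exists r1, Ql s t1 r1) with
  | left H => proj1_sig (constructive_indefinite_description _ H)
  | right _ => s
  end.
Lemma ch_lam_spec s t1 : (exists r1, Ql s t1 r1) -> Ql s t1 (ch_lam s t1).
Proof. intros H. unfold ch_lam. destruct (excluded_middle_informative _); [|contradiction].
  exact (proj2_sig (constructive_indefinite_description _ e)). Qed.

Definition ch_at s t : T :=
  match excluded_middle_informative (exists r, Qt s t r) with
  | left H => proj1_sig (constructive_indefinite_description _ H)
  | right _ => s
  end.
Lemma ch_at_spec s t : (exists r, Qt s t r) -> Qt s t (ch_at s t).
Proof. intros H. unfold ch_at. destruct (excluded_middle_informative _); [|contradiction].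
  exact (proj2_sig (constructive_indefinite_description _ e)). Qed.

CoFixpoint build (s t : T) : T :=
  match t with
  | Var _ n => ch_at s t
  | Con c => ch_at s t
  | App t1 t2 => App (build (fst (ch_app s t1 t2)) t1) (build (snd (ch_app s t1 t2)) t2)
  | Lam t1 => Lam (build (ch_lam s t1) t1)
  end.

Lemma build_var s n : build s (Var C n) = ch_at s (Var C n).
Proof. rewrite (frob_eq (build s (Var C n))). simpl. symmetry; apply frob_eq. Qed.
Lemma build_con s c : build s (Con c) = ch_at s (Con c).
Proof. rewrite (frob_eq (build s (Con c))). simpl. symmetry; apply frob_eq. Qed.
Lemma build_app s t1 t2 : build s (App t1 t2) = App (build (fst (ch_app s t1 t2)) t1) (build (snd (ch_app s t1 t2)) t2).
Proof. rewrite (frob_eq (build s (App t1 t2))). reflexivity. Qed.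
Lemma build_lam s t1 : build s (Lam t1) = Lam (build (ch_lam s t1) t1).
Proof. rewrite (frob_eq (build s (Lam t1))). reflexivity. Qed.

Lemma inf_refl R : forall t : T, inf R t t.
Proof. cofix CIH. intros [n|c|a b|a]. apply inf_var; constructor. apply inf_con; constructor.
  eapply inf_app. constructor. apply CIH. apply CIH. eapply inf_lam. constructor. apply CIH. Qed.
Lemma inf_pre R (s r t : T) : star R s r -> inf R r t -> inf R s t.
Proof. intros H1 H2; destruct H2.
  - apply inf_var; eapply star_trans; eauto.
  - apply inf_con; eapply star_trans; eauto.
  - eapply inf_app; eauto. eapply star_trans; eauto.
  - eapply inf_lam; eauto. eapply star_trans; eauto. Qed.

Lemma build_inf : forall s t, Pp s t -> inf (@beta_step C) s (build s t).
Proof.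
  cofix CIH. intros s [n|c|t1 t2|t1] H.
  - rewrite build_var. destruct (ch_at_spec s (Var C n)) as [H1 H2].
    { apply Pp_at; auto; discriminate. }
    eapply inf_pre; eauto. apply inf_refl.
  - rewrite build_con. destruct (ch_at_spec s (Con c)) as [H1 H2].
    { apply Pp_at; auto; discriminate. }
    eapply inf_pre; eauto. apply inf_refl.
  - rewrite build_app. destruct (ch_app_spec s t1 t2 (Pp_app _ _ _ H)) as [H1 [H2 H3]].
    eapply inf_app. eauto. apply CIH; auto. apply CIH; auto.
  - rewrite build_lam. destruct (ch_lam_spec s t1 (Pp_lam _ _ H)) as [H1 H2].
    eapply inf_lam. eauto. apply CIH; auto.
Qed.

Lemma build_pb : forall s t, Pp s t -> pb (build s t) t.
Proof.
  cofix CIH. intros s [n|c|t1 t2|t1] H.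
  - rewrite build_var. destruct (ch_at_spec s (Var C n)) as [H1 H2].
    { apply Pp_at; auto; discriminate. } exact H2.
  - rewrite build_con. destruct (ch_at_spec s (Con c)) as [H1 H2].
    { apply Pp_at; auto; discriminate. } exact H2.
  - rewrite build_app. destruct (ch_app_spec s t1 t2 (Pp_app _ _ _ H)) as [H1 [H2 H3]].
    apply pb_app; apply CIH; auto.
  - rewrite build_lam. destruct (ch_lam_spec s t1 (Pp_lam _ _ H)) as [H1 H2].
    apply pb_lam. apply CIH; auto.
Qed.

Lemma main_sec s t : inf (beta_bot_step bot) s t -> exists r, inf (@beta_step C) s r /\ pb r t.
Proof. intros H. assert (Hp : Pp s t) by (exists s; split; auto; apply pb_refl).
  exists (build s t); split. apply build_inf; auto. apply build_pb; auto. Qed.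

End S.

Theorem theorem5p30 (C : Type) (bot : C) (s t : term C) :
  inf (beta_bot_step bot) s t ->
  exists r : term C, inf (@beta_step C) s r /\ par_bot bot r t.
Proof. apply main_sec. Qed.
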